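(* In the publishing problem, assume the delay cost is global with aggregated delay cost $F^{(d)}$ being $\frac{\sigma}{2}$-sub-additive, and the publishing cost is constant, $C^{(p)}_t(N)=\beta\,\mathbb{1}[N\neq\emptyset]$ (no assumption is made on the price dynamics $R$). Let $\pi$ be the policy $$\pi(t,Q_t,P_t)=\begin{cases}Q_t & \text{if }\gamma^{|Q_t|-1}\beta P_t\le F^{(d)}(|Q_t|+1),\\ \emptyset&\text{otherwise.}\end{cases}$$ Then $C(\pi)\le\sigma\,C(\pi^* )$, where $\pi^*$ is an optimal policy.
   Context: The publishing problem is the following infinite-horizon MDP in discrete time $t=0,1,2,\dots$. At each step $t$ a new transaction $H_t$ is created. The state at time $t$ is $(t,P_t,Q_t)$ with gas price $P_t\ge0$ and set $Q_t$ of unpublished transactions ($Q_0=\emptyset$). A policy $\pi$ chooses $N^\pi_t\subseteq Q_t$ to publish, incurring cost $C_t=P_t\,C^{(p)}_t(N^\pi_t)+C^{(d)}_t(Q_t\setminus N^\pi_t)$; then $Q_{t+1}=(Q_t\setminus N^\pi_t)\cup\{H_t\}$ and $P_{t+1}=R(P_t)$ for a random function $R$. Publishing cost: $C^{(p)}_t(N)=\alpha|N|+\beta\,\mathbb{1}[N\ne\emptyset]$, $\alpha,\beta\ge0$ (here $\alpha=0$). Delay cost: $C^{(d)}_t(N)=\sum_{H_\tau\in N}C^{(d)}_{H_\tau}(t-\tau)$ with non-negative functions $C^{(d)}_{H_\tau}$; it is global if all equal one function $C^{(d)}$. The expected total cost is $C(\pi)=\mathbb{E}[\sum_t\gamma^tC_t]$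 with $0<\gamma<1$; a policy is optimal if it minimizes $C(\pi)$. The aggregated delay cost is $F^{(d)}(n)=\sum_{t=1}^{n-1}\sum_{i=1}^{t}\gamma^{t-1}C^{(d)}(i)$. $F^{(d)}$ is $\sigma'$-sub-additive if for all $n_1,n_2\ge1$: $F^{(d)}(n_1+n_2)\le\sigma'\left(F^{(d)}(n_1+1)+\gamma^{n_1}F^{(d)}(n_2)\right)$. *)

(* Defs.v *)
From HB Require Import structures.
From mathcomp Require Import all_boot all_order all_algebra.
From mathcomp Require Import finmap.
From mathcomp Require Import all_classical all_reals all_analysis.
Set Implicit Arguments. Unset Strict Implicit. Unset Printing Implicit Defensive.
Import Order.TTheory GRing.Theory Num.Theory.
Local Open Scope ring_scope.
Local Open Scope fset_scope.

(* Transactions H_tau are identified with their creation time tau : nat.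
   A set of unpublished transactions is a finite set of creation times. *)

(* A (Markov) policy: maps the state (t, P_t, Q_t) to the set N_t to publish. *)
Definition policy (R : Type) := nat -> R -> {fset nat} -> {fset nat}.

Definition valid_policy (R : Type) (pi : policy R) : Prop :=
  forall t p Q, pi t p Q `<=` Q.

Definition pub_cost (R : realType) (alpha beta : R) (N : {fset nat}) : R :=
  alpha * (#|` N|)%:R + beta * (N != fset0)%:R.

Definition delay_cost (R : realType) (Cd : nat -> R) (t : nat) (N : {fset nat}) : R :=
  \sum_(tau <- N) Cd (t - tau)%N.

Fixpoint queue (R : Type) (pi : policy R) (p : nat -> R) (t : nat) : {fset nat} :=
  match t with
  | 0 => fset0
  | t'.+1 => (queue pi p t' `\` pi t' (p t') (queue pi p t')) `|` [fset t']
  end.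

Definition stage_cost (R : realType) (alpha beta : R) (Cd : nat -> R)
  (pi : policy R) (p : nat -> R) (t : nat) : R :=
  let Q := queue pi p t in
  let N := pi t (p t) Q in
  p t * pub_cost alpha beta N + delay_cost Cd t (Q `\` N).

Definition path_cost (R : realType) (gamma alpha beta : R) (Cd : nat -> R)
  (pi : policy R) (p : nat -> R) : \bar R :=
  (\sum_(0 <= t <oo) ((gamma ^+ t * stage_cost alpha beta Cd pi p t)%:E))%E.

Fixpoint price (Omega R : Type) (P0 : Omega -> R) (Rs : nat -> Omega -> R -> R)
  (w : Omega) (t : nat) : R :=
  match t with
  | 0 => P0 w
  | t'.+1 => Rs t' w (price P0 Rs w t')
  end.

Definition expected_cost (R : realType) (d : measure_display) (Omega : measurableType d)
  (Pr : probability Omega R) (P0 : Omega -> R) (Rs : nat -> Omega -> R -> R)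
  (gamma alpha beta : R) (Cd : nat -> R) (pi : policy R) : \bar R :=
  (\int[Pr]_w path_cost gamma alpha beta Cd pi (price P0 Rs w))%E.

Definition optimal_policy (R : realType) (d : measure_display) (Omega : measurableType d)
  (Pr : probability Omega R) (P0 : Omega -> R) (Rs : nat -> Omega -> R -> R)
  (gamma alpha beta : R) (Cd : nat -> R) (pi : policy R) : Prop :=
  valid_policy pi /\
  forall pi' : policy R, valid_policy pi' ->
    (expected_cost Pr P0 Rs gamma alpha beta Cd pi
       <= expected_cost Pr P0 Rs gamma alpha beta Cd pi')%E.

Definition Fd (R : realType) (gamma : R) (Cd : nat -> R) (n : nat) : R :=
  \sum_(1 <= t < n) \sum_(1 <= i < t.+1) gamma ^+ (t - 1) * Cd i.

Definition sub_additive (R : realType) (gamma sigma' : R) (F : nat -> R) : Prop :=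
  forall n1 n2 : nat, (1 <= n1)%N -> (1 <= n2)%N ->
    F (n1 + n2)%N <= sigma' * (F n1.+1 + gamma ^+ n1 * F n2).

Definition threshold_policy (R : realType) (gamma beta : R) (F : nat -> R) : policy R :=
  fun t p Q =>
    if gamma ^ ((#|` Q|)%:Z - 1) * beta * p <= F (#|` Q|).+1 then Q else fset0.

(* Main.v *)
Require Import Defs.
From HB Require Import structures.
From mathcomp Require Import all_boot all_order all_algebra.
From mathcomp Require Import finmap.
From mathcomp Require Import all_classical all_reals all_analysis.
From mathcomp Require Import lra zify.
Import Order.TTheory GRing.Theory Num.Theory.
Local Open Scope ring_scope.
Set Implicit Arguments. Unset Strict Implicit.

Lemma inv_lemma (R : realType) (g : R) (F D b : nat -> R) (pub : nat -> bool) (s T : nat) :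
  0 <= g -> (forall t, 0 <= b t) ->
  (forall n, (1 <= n)%N -> F n.+1 = F n + g ^+ (n - 1) * D n) -> F 1%N = 0 ->
  (forall t, (s < t < T)%N -> pub t -> g ^+ s.+1 * F (t - s).+1 <= b t) ->
  (forall L t, (L < t)%N -> (forall t', (L < t' < t)%N -> ~~ pub t') -> ~~ pub t ->
      g ^+ t * D (t - L)%N <= b t) ->
  (s < T)%N ->
  ((forall t', (s < t' < T)%N -> ~~ pub t') /\
     g ^+ s.+1 * F (T - s)%N <= \sum_(s.+1 <= t < T) b t)
  \/ (exists k, [/\ (s < k < T)%N, pub k, (forall t', (k < t' < T)%N -> ~~ pub t') &
      g ^+ s.+1 * F (k - s).+1 + g ^+ k.+1 * F (T - k)%N <= \sum_(s.+1 <= t < T) b t]).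
Proof.
move=> g0 b0 FS F1 H1 H2.
elim: T H1 => [//|T IH] H1; rewrite ltnS leq_eqVlt => /orP[/eqP <-|sT].
  left; split; first by move=> t' /andP[a c]; exfalso; rewrite ltnS in c; move: (leq_ltn_trans c a); rewrite ltnn.
  by rewrite big_geq // (_ : (s.+1 - s)%N = 1%N) ?F1 ?mulr0 // subSn // subnn.
have H1' : forall t, (s < t < T)%N -> pub t -> g ^+ s.+1 * F (t - s).+1 <= b t.
  by move=> t /andP[a c]; apply: H1; rewrite a ltnW.
have sum0 : 0 <= \sum_(s.+1 <= t < T) b t by apply: sumr_ge0.
rewrite big_nat_recr //=.
case pT: (pub T).
  right; exists T; split => //.
  - by rewrite sT ltnSn.
  - by move=> t' /andP[a c]; exfalso; rewrite ltnS in c; move: (leq_ltn_trans c a); rewrite ltnn.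
  - rewrite subSnn F1 mulr0 addr0.
    apply: ler_wpDl => //; apply: H1 => //; by rewrite sT ltnSn.
have [[np Hs]|[k [kr pk np Hk]]] := IH H1' sT.
  left; split.
    move=> t' /andP[a c]; rewrite ltnS leq_eqVlt in c; case/orP: c => [/eqP->|c]; first by rewrite pT.
    by apply: np; rewrite a c.
  rewrite subSn ?(ltnW sT) // FS ?subn_gt0 // mulrDr.
  apply: lerD => //.
  have -> : g ^+ s.+1 * (g ^+ (T - s - 1) * D (T - s)%N) = g ^+ T * D (T - s)%N.
    by rewrite mulrA -exprD; congr (_ ^+ _ * _); lia.
  by apply: H2 => //; rewrite pT.
right; exists k; case/andP: kr => sk kT; split => //.
  - by rewrite sk ltnW.
  - move=> t' /andP[a c]; rewrite ltnS leq_eqVlt in c; case/orP: c => [/eqP->|c]; first by rewrite pT.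
    by apply: np; rewrite a c.
rewrite subSn ?(ltnW kT) // (FS (T - k)%N) ?subn_gt0 // mulrDr addrA.
apply: lerD => //.
have -> : g ^+ k.+1 * (g ^+ (T - k - 1) * D (T - k)%N) = g ^+ T * D (T - k)%N.
  by rewrite mulrA -exprD; congr (_ ^+ _ * _); lia.
by apply: H2 => //; rewrite pT.
Qed.

Lemma subadd_use (R : realType) (g sg : R) (F : nat -> R) (s k T : nat) (X : R) :
  0 <= g -> 0 <= sg -> sub_additive g (sg / 2) F -> (s < k < T)%N ->
  g ^+ s.+1 * F (k - s).+1 + g ^+ k.+1 * F (T - k)%N <= X ->
  g ^+ s.+1 * F (T - s)%N <= sg / 2 * X.
Proof.
move=> g0 sg0 sa /andP[sk kT] HX.
have -> : (T - s = (k - s) + (T - k))%N by lia.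
apply: (le_trans (ler_wpM2l (exprn_ge0 _ g0) (sa (k - s)%N (T - k)%N _ _))); try lia.
rewrite mulrCA; apply: ler_wpM2l.
  by apply: divr_ge0.
rewrite mulrDr mulrA -exprD.
by have -> : (s.+1 + (k - s) = k.+1)%N by lia.
Qed.

Lemma trunc_bound (R : realType) (g sg : R) (F D b : nat -> R) (pub : nat -> bool) (s T : nat) :
  0 <= g -> 2 <= sg -> (forall t, 0 <= b t) -> (forall n, 0 <= F n) ->
  sub_additive g (sg / 2) F ->
  (forall n, (1 <= n)%N -> F n.+1 = F n + g ^+ (n - 1) * D n) -> F 1%N = 0 ->
  (forall t, (s < t < T)%N -> pub t -> g ^+ s.+1 * F (t - s).+1 <= b t) ->
  (forall L t, (L < t)%N -> (forall t', (L < t' < t)%N -> ~~ pub t') -> ~~ pub t ->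
      g ^+ t * D (t - L)%N <= b t) ->
  (s < T)%N ->
  g ^+ s.+1 * F (T - s)%N <= sg * \sum_(s.+1 <= t < T) b t.
Proof.
move=> g0 sg2 b0 F0 sa FS F1 H1 H2 sT.
have sum0 : 0 <= \sum_(s.+1 <= t < T) b t by apply: sumr_ge0.
have [[_ Hs]|[k [kr _ _ Hk]]] := inv_lemma g0 b0 FS F1 H1 H2 sT.
  apply: (le_trans Hs); rewrite -{1}(mul1r (\sum_(_ <= _ < _) _)).
  apply: ler_wpM2r => //; lra.
have sg0 : 0 <= sg by lra.
apply: (le_trans (subadd_use g0 sg0 sa kr Hk)).
apply: ler_wpM2r => //; lra.
Qed.

Lemma pub_bound (R : realType) (g sg : R) (F D b : nat -> R) (pub : nat -> bool) (s T : nat) (c : R) :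
  0 <= g -> 2 <= sg -> (forall t, 0 <= b t) -> (forall n, 0 <= F n) -> (forall n, 0 <= D n) ->
  sub_additive g (sg / 2) F ->
  (forall n, (1 <= n)%N -> F n.+1 = F n + g ^+ (n - 1) * D n) -> F 1%N = 0 ->
  (forall t, (s < t < T)%N -> pub t -> g ^+ s.+1 * F (t - s).+1 <= b t) ->
  (forall L t, (L < t)%N -> (forall t', (L < t' < t)%N -> ~~ pub t') -> ~~ pub t ->
      g ^+ t * D (t - L)%N <= b t) ->
  (s < T)%N ->
  c <= g ^+ s.+1 * F (T - s).+1 -> (pub T -> c <= b T) ->
  g ^+ s.+1 * F (T - s)%N + c <= sg * \sum_(s.+1 <= t < T.+1) b t.
Proof.
move=> g0 sg2 b0 F0 D0 sa FS F1 H1 H2 sT cF cb.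
have sum0 : 0 <= \sum_(s.+1 <= t < T) b t by apply: sumr_ge0.
have gs0 : 0 <= g ^+ s.+1 by apply: exprn_ge0.
have Fm : F (T - s)%N <= F (T - s).+1.
  rewrite FS ?subn_gt0 //; apply: ler_wpDr => //; apply: mulr_ge0 => //; exact: exprn_ge0.
case pT: (pub T).
  have cbT := cb pT.
  rewrite big_nat_recr /=; last exact: sT.
  have [[_ Hs]|[k [kr _ _ Hk]]] := inv_lemma g0 b0 FS F1 H1 H2 sT.
    have : 0 <= b T := b0 T.
    nra.
  have sg0 : 0 <= sg by lra.
  have := subadd_use g0 sg0 sa kr Hk.
  have : 0 <= b T := b0 T.
  nra.
have H1' : forall t, (s < t < T.+1)%N -> pub t -> g ^+ s.+1 * F (t - s).+1 <= b t.
  move=> t /andP[a e]; rewrite ltnS leq_eqVlt in e; case/orP: e => [/eqP->|e]; first by rewrite pT.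
  by apply: H1; rewrite a e.
have sT' : (s < T.+1)%N by apply: ltnW.
have sum0' : 0 <= \sum_(s.+1 <= t < T.+1) b t by apply: sumr_ge0.
have FF : g ^+ s.+1 * F (T - s)%N <= g ^+ s.+1 * F (T - s).+1 by apply: ler_wpM2l.
have [[_ Hs]|[k [kr _ _ Hk]]] := inv_lemma g0 b0 FS F1 H1' H2 sT'.
  rewrite subSn in Hs; last exact: ltnW.
  nra.
have sg0 : 0 <= sg by lra.
have := subadd_use g0 sg0 sa kr Hk.
rewrite subSn; last exact: ltnW.
nra.
Qed.

Import HBNNSimple.

Lemma int_le_scale (R : realType) (d : measure_display) (Omega : measurableType d)
  (Pr : probability Omega R) (f g : Omega -> \bar R) (k : R) :
  (forall w, (0 <= f w)%E) -> (forall w, (0 <= g w)%E) -> 0 < k ->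
  (forall w, (f w <= k%:E * g w)%E) ->
  (\int[Pr]_w f w <= k%:E * \int[Pr]_w g w)%E.
Proof.
move=> f0 g0 k0 fg.
rewrite !ge0_integralTE //.
apply: ge_ereal_sup => _ [h /= hf <-].
have ki0 : 0 <= k^-1 by rewrite invr_ge0 ltW.
pose h' := scale_nnsfun h ki0.
have H : (sintegral Pr h' <= ereal_sup [set sintegral Pr h0 | h0 in
   [set h0 : {nnsfun Omega >-> R} | forall x, ((h0 x)%:E <= g x)%E]])%E.
  apply: ereal_sup_ubound; exists h' => //= x.
  rewrite /h' /=.
  have := le_trans (hf x) (fg x).
  have := g0 x.
  case: (g x) => [r|_|//] /=; last by rewrite leey.
  rewrite !lee_fin => r0 hr.
  by rewrite ler_pdivrMl.
have E : sintegral Pr h' = ((k^-1)%:E * sintegral Pr h)%E.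
  by rewrite -sintegralrM.
apply: (le_trans _ (lee_wpmul2l _ H)); last by rewrite lee_fin ltW.
rewrite E muleA -EFinM mulfV ?mul1e //; exact: lt0r_neq0.
Qed.

Lemma series_le_scale (R : realType) (x y : nat -> R) (k : R) :
  (forall t, 0 <= x t) -> (forall t, 0 <= y t) -> 0 <= k ->
  (forall T, \sum_(0 <= t < T) x t <= k * \sum_(0 <= t < T) y t) ->
  (\sum_(0 <= t <oo) (x t)%:E <= k%:E * \sum_(0 <= t <oo) (y t)%:E)%E.
Proof.
move=> x0 y0 k0 H.
apply: lime_le; first by apply: is_cvg_nneseries => n _ _; rewrite lee_fin.
apply: nearW => n /=.
rewrite sumEFin.
apply: (le_trans (_ : _ <= (k * \sum_(0 <= t < n) y t)%:E)%E); first by rewrite lee_fin.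
rewrite EFinM; apply: lee_wpmul2l; first by rewrite lee_fin.
rewrite -sumEFin.
by apply: nneseries_lim_ge => i _ _; rewrite lee_fin.
Qed.


Definition Dsum (R : realType) (Cd : nat -> R) (m : nat) : R := \sum_(1 <= i < m.+1) Cd i.

Lemma Fd_S (R : realType) (g : R) (Cd : nat -> R) (n : nat) : (1 <= n)%N ->
  Fd g Cd n.+1 = Fd g Cd n + g ^+ (n - 1) * Dsum Cd n.
Proof.
move=> n1; rewrite /Fd big_nat_recr //= /Dsum mulr_sumr //.
Qed.

Lemma Fd_1 (R : realType) (g : R) (Cd : nat -> R) : Fd g Cd 1 = 0.
Proof. by rewrite /Fd big_geq. Qed.

Lemma Fd_ge0 (R : realType) (g : R) (Cd : nat -> R) n :
  0 <= g -> (forall i, 0 <= Cd i) -> 0 <= Fd g Cd n.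
Proof.
move=> g0 C0; apply: sumr_ge0 => t _; apply: sumr_ge0 => i _.
by apply: mulr_ge0 => //; apply: exprn_ge0.
Qed.

Lemma Dsum_ge0 (R : realType) (Cd : nat -> R) n :
  (forall i, 0 <= Cd i) -> 0 <= Dsum Cd n.
Proof. by move=> C0; apply: sumr_ge0. Qed.

Lemma iota_sum (R : realType) (Cd : nat -> R) (n s : nat) :
  \sum_(tau <- iota s n) Cd (s + n - tau)%N = Dsum Cd n.
Proof.
elim: n s => [|n IH] s; first by rewrite big_nil /Dsum big_geq.
rewrite /= big_cons.
have -> : \sum_(j <- iota s.+1 n) Cd (s + n.+1 - j)%N = \sum_(j <- iota s.+1 n) Cd (s.+1 + n - j)%N.
  by apply: eq_bigr => j _; rewrite addnS addSn.
rewrite IH /Dsum [in RHS]big_nat_recr //= [RHS]addrC.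
by rewrite addKn.
Qed.

Lemma sum_sub (R : realType) (f : nat -> R) (s1 s2 : seq nat) :
  (forall x, 0 <= f x) -> uniq s1 -> uniq s2 -> {subset s1 <= s2} ->
  \sum_(x <- s1) f x <= \sum_(x <- s2) f x.
Proof.
move=> f0 u1 u2 sub.
rewrite [X in _ <= X](bigID (fun x => x \in s1)) /=.
have -> : \sum_(i <- s2 | i \in s1) f i = \sum_(i <- s1) f i.
  rewrite -big_filter; apply: perm_big; apply: uniq_perm => //.
    exact: filter_uniq.
  move=> x; rewrite mem_filter; apply/andP/idP => [[]//|xs]; split => //.
  exact: sub.
apply: ler_wpDr => //; apply: sumr_ge0 => i _; exact: f0.
Qed.

Lemma queue_lt (R : Type) (pi : policy R) (p : nat -> R) t x :
  x \in queue pi p t -> (x < t)%N.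
Proof.
elim: t => [|t IH] /=; first by rewrite inE.
rewrite in_fsetU in_fsetD in_fset1 => /orP[/andP[_ /IH]|/eqP->//]; lia.
Qed.

Definition thrA (R : realType) (g be : R) (Cd : nat -> R) : policy R :=
  threshold_policy g be (Fd g Cd).

Definition condA (R : realType) (g be : R) (Cd : nat -> R) (p : nat -> R) (t : nat) : bool :=
  g ^ ((#|` queue (thrA g be Cd) p t|)%:Z - 1) * be * p t
    <= Fd g Cd (#|` queue (thrA g be Cd) p t|).+1.

Fixpoint es (R : realType) (g be : R) (Cd : nat -> R) (p : nat -> R) (t : nat) : nat :=
  match t with
  | 0 => 0%N
  | t'.+1 => if condA g be Cd p t' then t' else es g be Cd p t'
  end.

Lemma thrA_eq (R : realType) (g be : R) (Cd : nat -> R) (p : nat -> R) t :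
  thrA g be Cd t (p t) (queue (thrA g be Cd) p t) =
  if condA g be Cd p t then queue (thrA g be Cd) p t else fset0.
Proof. by []. Qed.

Lemma es_le (R : realType) (g be : R) (Cd : nat -> R) (p : nat -> R) t :
  (es g be Cd p t <= t)%N.
Proof. elim: t => [//|t IH] /=; case: ifP => _; lia. Qed.

Lemma es_lt (R : realType) (g be : R) (Cd : nat -> R) (p : nat -> R) t :
  (0 < t)%N -> (es g be Cd p t < t)%N.
Proof. case: t => [//|t] _ /=; have := es_le g be Cd p t; case: ifP => _; lia. Qed.

Lemma mem_queueA (R : realType) (g be : R) (Cd : nat -> R) (p : nat -> R) t x :
  (x \in queue (thrA g be Cd) p t) = (es g be Cd p t <= x < t)%N.
Proof.
elim: t x => [|t IH] x /=; first by rewrite inE; lia.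
rewrite thrA_eq; have := es_le g be Cd p t.
case: ifP => _ H.
  rewrite fsetDv in_fsetU in_fset1 inE /=; apply/eqP/idP => [->|]; lia.
rewrite fsetD0 in_fsetU in_fset1 IH.
apply/orP/idP => [[|/eqP]|]; lia.
Qed.

Lemma queueA_perm (R : realType) (g be : R) (Cd : nat -> R) (p : nat -> R) t :
  perm_eq (queue (thrA g be Cd) p t) (iota (es g be Cd p t) (t - es g be Cd p t)).
Proof.
apply: uniq_perm; [exact: fset_uniq | exact: iota_uniq |] => x.
rewrite mem_queueA mem_iota subnKC //; exact: es_le.
Qed.

Lemma card_queueA (R : realType) (g be : R) (Cd : nat -> R) (p : nat -> R) t :
  #|` queue (thrA g be Cd) p t| = (t - es g be Cd p t)%N.
Proof. by have := perm_size (queueA_perm g be Cd p t); rewrite size_iota. Qed.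

Lemma delay_queueA (R : realType) (g be : R) (Cd : nat -> R) (p : nat -> R) t :
  delay_cost Cd t (queue (thrA g be Cd) p t) = Dsum Cd (t - es g be Cd p t).
Proof.
rewrite /delay_cost (perm_big _ (queueA_perm g be Cd p t)).
rewrite -(iota_sum Cd _ (es g be Cd p t)); apply: eq_bigr => x _; congr (Cd _).
rewrite subnKC //. exact: es_le.
Qed.

Lemma stage_A_cond (R : realType) (g be : R) (Cd : nat -> R) (p : nat -> R) t :
  condA g be Cd p t ->
  stage_cost 0 be Cd (thrA g be Cd) p t =
    p t * (be * (queue (thrA g be Cd) p t != fset0)%:R).
Proof.
move=> c; rewrite /stage_cost /= thrA_eq c fsetDv /pub_cost mul0r add0r.
by rewrite /delay_cost big_seq_fset0 addr0.
Qed.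

Lemma stage_A_ncond (R : realType) (g be : R) (Cd : nat -> R) (p : nat -> R) t :
  ~~ condA g be Cd p t ->
  stage_cost 0 be Cd (thrA g be Cd) p t = Dsum Cd (t - es g be Cd p t).
Proof.
move=> c; rewrite /stage_cost /= thrA_eq (negbTE c) fsetD0 /pub_cost mul0r add0r.
by rewrite eqxx mulr0 mulr0 add0r delay_queueA.
Qed.

Lemma es_stable (R : realType) (g be : R) (Cd : nat -> R) (p : nat -> R) T t :
  (t <= T)%N -> (es g be Cd p T < t)%N -> es g be Cd p t = es g be Cd p T.
Proof.
elim: T t => [|T IH] t; first by move=> a /= b; lia.
move=> tT /=; case: ifP => c H.
  have -> : t = T.+1 by lia.
  by rewrite /= c.
rewrite leq_eqVlt in tT; case/orP: tT => [/eqP->|tT] /=; first by rewrite c.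
by apply: IH.
Qed.

Lemma noncond (R : realType) (g be : R) (Cd : nat -> R) (p : nat -> R) T t :
  (es g be Cd p T < t < T)%N -> ~~ condA g be Cd p t.
Proof.
move=> /andP[a b]; apply/negP => c.
have e1 := es_stable (ltnW b) a.
have e2 : es g be Cd p t.+1 = es g be Cd p T by apply: es_stable => //; lia.
move: e2 => /=; rewrite c => e2; lia.
Qed.

Lemma cond_eq (R : realType) (g be : R) (Cd : nat -> R) (p : nat -> R) t :
  (0 < t)%N ->
  condA g be Cd p t =
  (g ^+ (t - es g be Cd p t - 1) * be * p t <= Fd g Cd (t - es g be Cd p t).+1).
Proof.
move=> t0; rewrite /condA card_queueA.
have h : (1 <= t - es g be Cd p t)%N by have := es_lt g be Cd p t0; lia.
by rewrite (subzn h).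
Qed.

Lemma cond_true_bound (R : realType) (g be : R) (Cd : nat -> R) (p : nat -> R) t :
  0 < g -> (0 < t)%N -> condA g be Cd p t ->
  g ^+ t * (p t * be) <= g ^+ (es g be Cd p t).+1 * Fd g Cd (t - es g be Cd p t).+1.
Proof.
move=> g0 t0; rewrite cond_eq // => c.
have h := es_lt g be Cd p t0.
have -> : g ^+ t = g ^+ (es g be Cd p t).+1 * g ^+ (t - es g be Cd p t - 1).
  by rewrite -exprD; congr (_ ^+ _); lia.
rewrite -mulrA; apply: ler_wpM2l; first exact/exprn_ge0/ltW.
by rewrite mulrA; move: c; rewrite -mulrA (mulrC be) mulrA.
Qed.

Lemma cond_false_bound (R : realType) (g be : R) (Cd : nat -> R) (p : nat -> R) t :
  0 < g -> (0 < t)%N -> ~~ condA g be Cd p t ->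
  g ^+ (es g be Cd p t).+1 * Fd g Cd (t - es g be Cd p t).+1 < g ^+ t * (p t * be).
Proof.
move=> g0 t0; rewrite cond_eq // -ltNge => c.
have h := es_lt g be Cd p t0.
have -> : g ^+ t = g ^+ (es g be Cd p t).+1 * g ^+ (t - es g be Cd p t - 1).
  by rewrite -exprD; congr (_ ^+ _); lia.
rewrite -mulrA ltr_pM2l; last exact/exprn_gt0.
by rewrite mulrA; move: c; rewrite -mulrA (mulrC be) mulrA.
Qed.

Definition pubB (R : realType) (B : policy R) (p : nat -> R) t : bool :=
  B t (p t) (queue B p t) != fset0.

Lemma delay_ge0 (R : realType) (Cd : nat -> R) t (N : {fset nat}) :
  (forall i, 0 <= Cd i) -> 0 <= delay_cost Cd t N.
Proof. move=> C0; rewrite /delay_cost; elim: (enum_fset N) => [|a l IH]; rewrite ?big_nil ?big_cons //; exact: addr_ge0. Qed.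

Lemma stage_ge0 (R : realType) (be : R) (Cd : nat -> R) (B : policy R) (p : nat -> R) t :
  0 <= be -> (forall i, 0 <= Cd i) -> (forall t, 0 <= p t) ->
  0 <= stage_cost 0 be Cd B p t.
Proof.
move=> be0 C0 p0; rewrite /stage_cost /pub_cost mul0r add0r.
apply: addr_ge0; last first. rewrite /delay_cost. apply: (sumr_ge0 _ (fun i _ => C0 _)).
by apply: mulr_ge0 => //; apply: mulr_ge0.
Qed.

Lemma stage_pub (R : realType) (be : R) (Cd : nat -> R) (B : policy R) (p : nat -> R) t :
  0 <= be -> (forall i, 0 <= Cd i) -> (forall t, 0 <= p t) -> pubB B p t ->
  p t * be <= stage_cost 0 be Cd B p t.
Proof.
move=> be0 C0 p0 pb; rewrite /stage_cost /pub_cost mul0r add0r.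
move: pb; rewrite /pubB => ->; rewrite mulr1.
by rewrite lerDl /delay_cost; apply: (sumr_ge0 _ (fun i _ => C0 _)).
Qed.

Lemma memB (R : realType) (B : policy R) (p : nat -> R) L t :
  (forall t', (L < t' < t)%N -> ~~ pubB B p t') ->
  forall x, (L <= x < t)%N -> x \in queue B p t.
Proof.
elim: t => [|t IH] H x; first by lia.
move=> /andP[a b] /=; rewrite in_fsetU in_fset1.
rewrite ltnS leq_eqVlt in b; case/orP: b => [->|b]; first by rewrite orbT.
have Lt : (L < t)%N by lia.
have := H t; rewrite Lt ltnSn => /(_ isT); rewrite /pubB negbK => /eqP ->.
rewrite fsetD0 IH ?a ?b //.
by move=> t' /andP[c e]; apply: H; rewrite c ltnS ltnW.
Qed.

Lemma stage_nopub (R : realType) (be : R) (Cd : nat -> R) (B : policy R) (p : nat -> R) L t :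
  0 <= be -> (forall i, 0 <= Cd i) -> (forall t, 0 <= p t) -> (L < t)%N ->
  (forall t', (L < t' < t)%N -> ~~ pubB B p t') -> ~~ pubB B p t ->
  Dsum Cd (t - L) <= stage_cost 0 be Cd B p t.
Proof.
move=> be0 C0 p0 Lt H np; rewrite /stage_cost /pub_cost mul0r add0r.
move: np; rewrite /pubB negbK => /eqP ->; rewrite eqxx mulr0 mulr0 add0r fsetD0.
rewrite /delay_cost -(iota_sum Cd _ L).
have -> : (L + (t - L))%N = t by lia.
apply: sum_sub => //; [exact: iota_uniq | exact: fset_uniq |].
move=> x; rewrite mem_iota => hx; apply: (memB H); lia.
Qed.


Definition aA (R : realType) (g be : R) Cd p t := g ^+ t * stage_cost 0 be Cd (thrA g be Cd) p t.
Definition bB (R : realType) (g be : R) Cd (B : policy R) p t := g ^+ t * stage_cost 0 be Cd B p t.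

Lemma W_lemma (R : realType) (g : R) (Cd : nat -> R) (s T : nat) : (s < T)%N ->
  \sum_(s.+1 <= i < T) g ^+ i * Dsum Cd (i - s) = g ^+ s.+1 * Fd g Cd (T - s).
Proof.
elim: T => [//|T IH]; rewrite ltnS leq_eqVlt => /orP[/eqP <-|sT].
  by rewrite big_geq // subSnn Fd_1 mulr0.
rewrite big_nat_recr //= IH // subSn ?(ltnW sT) // Fd_S ?subn_gt0 // mulrDr.
congr (_ + _); rewrite mulrA -exprD; congr (_ ^+ _ * _); lia.
Qed.


Lemma a_mid (R : realType) (g be : R) Cd p T i :
  (es g be Cd p T < i < T)%N ->
  aA g be Cd p i = g ^+ i * Dsum Cd (i - es g be Cd p T).
Proof.
move=> h; rewrite /aA stage_A_ncond; last exact: noncond h.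
case/andP: h => h1 h2.
by rewrite (es_stable (ltnW h2) h1).
Qed.

Lemma H1B (R : realType) (g be : R) Cd (B : policy R) p T :
  0 < g -> 0 <= be -> (forall i, 0 <= Cd i) -> (forall t, 0 <= p t) ->
  forall t, (es g be Cd p T < t < T)%N -> pubB B p t ->
  g ^+ (es g be Cd p T).+1 * Fd g Cd (t - es g be Cd p T).+1 <= bB g be Cd B p t.
Proof.
move=> g0 be0 C0 p0 t h pb.
have nc := noncond h.
case/andP: h => h1 h2.
have e := es_stable (ltnW h2) h1.
have t0 : (0 < t)%N by lia.
have := cond_false_bound g0 t0 nc; rewrite e => H.
apply: (le_trans (ltW H)); rewrite /bB; apply: ler_wpM2l; first exact/exprn_ge0/ltW.
exact: stage_pub.
Qed.

Lemma H2B (R : realType) (g be : R) Cd (B : policy R) p :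
  0 < g -> 0 <= be -> (forall i, 0 <= Cd i) -> (forall t, 0 <= p t) ->
  forall L t, (L < t)%N -> (forall t', (L < t' < t)%N -> ~~ pubB B p t') -> ~~ pubB B p t ->
  g ^+ t * Dsum Cd (t - L)%N <= bB g be Cd B p t.
Proof.
move=> g0 be0 C0 p0 L t Lt H np; rewrite /bB; apply: ler_wpM2l; first exact/exprn_ge0/ltW.
exact: stage_nopub.
Qed.

Lemma b_ge0 (R : realType) (g be : R) Cd (B : policy R) p :
  0 < g -> 0 <= be -> (forall i, 0 <= Cd i) -> (forall t, 0 <= p t) ->
  forall t, 0 <= bB g be Cd B p t.
Proof.
move=> g0 be0 C0 p0 t; rewrite /bB; apply: mulr_ge0; first exact/exprn_ge0/ltW.
exact: stage_ge0.
Qed.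

Lemma a0 (R : realType) (g be : R) Cd p : aA g be Cd p 0 = 0.
Proof.
rewrite /aA; case c: (condA g be Cd p 0).
  by rewrite stage_A_cond //= !mulr0.
by rewrite stage_A_ncond ?c //= /Dsum big_geq // mulr0.
Qed.

Lemma E_lemma (R : realType) (g be sg : R) Cd (B : policy R) p :
  0 < g -> 0 <= be -> (forall i, 0 <= Cd i) -> (forall t, 0 <= p t) -> 2 <= sg ->
  sub_additive g (sg / 2) (Fd g Cd) ->
  forall t, \sum_(0 <= i < (es g be Cd p t).+1) aA g be Cd p i
     <= sg * \sum_(0 <= i < (es g be Cd p t).+1) bB g be Cd B p i.
Proof.
move=> g0 be0 C0 p0 sg2 sa.
have g0' : 0 <= g by exact: ltW.
have b0 := b_ge0 B g0 be0 C0 p0.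
elim => [|t IH].
  rewrite /= big_nat1 big_nat1 a0; apply: mulr_ge0; [lra | exact: b0].
rewrite /=; case c: (condA g be Cd p t); last exact: IH.
have := es_le g be Cd p t; rewrite leq_eqVlt => /orP[/eqP E|st].
  by move: IH; rewrite E.
set s := es g be Cd p t in st IH *.
have t0 : (0 < t)%N by lia.
rewrite (big_cat_nat _ (n := s.+1)) //=; last by lia.
rewrite [X in _ <= sg * X](big_cat_nat _ (n := s.+1)) //=; last by lia.
rewrite mulrDr; apply: lerD => //.
rewrite big_nat_recr /=; last by lia.
have -> : \sum_(s.+1 <= i < t) aA g be Cd p i = \sum_(s.+1 <= i < t) g ^+ i * Dsum Cd (i - s).
  apply: eq_big_nat => i hi; rewrite (a_mid (T := t)) //.
rewrite W_lemma //.
have H1 := H1B (B := B) (T := t) g0 be0 C0 p0.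
have H2 := H2B (B := B) g0 be0 C0 p0.
have FS := fun n => @Fd_S R g Cd n.
have F0 := fun n => Fd_ge0 n g0' C0.
have D0 := fun n => Dsum_ge0 n C0.
have ale : aA g be Cd p t <= g ^+ t * (p t * be).
  rewrite /aA stage_A_cond //; apply: ler_wpM2l; first exact: exprn_ge0.
  apply: ler_wpM2l => //; case: (_ != _); rewrite ?mulr1 ?mulr0 //.
apply: (pub_bound g0' sg2 b0 F0 D0 sa FS (Fd_1 g Cd) H1 H2 st).
  apply: (le_trans ale); exact: cond_true_bound.
move=> pb; apply: (le_trans ale); rewrite /bB; apply: ler_wpM2l; first exact: exprn_ge0.
exact: stage_pub.
Qed.

Lemma Fin_lemma (R : realType) (g be sg : R) Cd (B : policy R) p :
  0 < g -> 0 <= be -> (forall i, 0 <= Cd i) -> (forall t, 0 <= p t) -> 2 <= sg ->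
  sub_additive g (sg / 2) (Fd g Cd) ->
  forall T, \sum_(0 <= i < T) aA g be Cd p i <= sg * \sum_(0 <= i < T) bB g be Cd B p i.
Proof.
move=> g0 be0 C0 p0 sg2 sa.
have g0' : 0 <= g by exact: ltW.
have b0 := b_ge0 B g0 be0 C0 p0.
case => [|T]; first by rewrite !big_geq // mulr0.
have st := es_lt g be Cd p (ltn0Sn T).
set s := es g be Cd p T.+1 in st *.
rewrite (big_cat_nat _ (n := s.+1)) //=.
rewrite [X in _ <= sg * X](big_cat_nat _ (n := s.+1)) //=.
rewrite mulrDr; apply: lerD; first exact: E_lemma.
have -> : \sum_(s.+1 <= i < T.+1) aA g be Cd p i = \sum_(s.+1 <= i < T.+1) g ^+ i * Dsum Cd (i - s).
  apply: eq_big_nat => i hi; rewrite (a_mid (T := T.+1)) //.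
rewrite W_lemma //.
have H1 := H1B (B := B) (T := T.+1) g0 be0 C0 p0.
have H2 := H2B (B := B) g0 be0 C0 p0.
have FS := fun n => @Fd_S R g Cd n.
have F0 := fun n => Fd_ge0 n g0' C0.
exact: (trunc_bound g0' sg2 b0 F0 sa FS (Fd_1 g Cd) H1 H2 st).
Qed.


Lemma small_sigma (R : realType) (g sg : R) (Cd : nat -> R) :
  0 < g -> (forall i, 0 <= Cd i) -> sub_additive g (sg / 2) (Fd g Cd) -> sg < 2 ->
  forall i, (1 <= i)%N -> Cd i = 0.
Proof.
move=> g0 C0 sa sg2.
have g0' : 0 <= g by exact: ltW.
have F0 := fun n => Fd_ge0 n g0' C0.
have F2 : Fd g Cd 2 = Cd 1%N.
  by rewrite (Fd_S g Cd (n := 1)) // Fd_1 add0r expr0 mul1r /Dsum big_nat1.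
have F20 : Fd g Cd 2 = 0.
  have := sa 1%N 1%N isT isT; rewrite Fd_1 mulr0 addr0 => H.
  have := F0 2%N; nra.
have Fz : forall n, Fd g Cd n.+1 = 0.
  elim => [|n IH]; first exact: Fd_1.
  have := sa 1%N n.+1 isT isT; rewrite F20 IH mulr0 addr0 mulr0 => H.
  by apply/eqP; rewrite eq_le F0 andbT.
case=> [//|i] i1.
have := Fd_S g Cd i1; rewrite !Fz add0r => /esym/eqP.
rewrite mulf_eq0 expf_eq0 (gt_eqF g0) andbF /= => /eqP Di.
apply/eqP; rewrite eq_le C0 andbT.
have : Cd i.+1 <= Dsum Cd i.+1.
  have -> : Dsum Cd i.+1 = Dsum Cd i + Cd i.+1 by rewrite /Dsum big_nat_recr.
  by apply: ler_wpDl => //; exact: (Dsum_ge0 _ C0).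
by rewrite Di.
Qed.

Lemma price_ge0 (Omega : Type) (R : realType) (P0 : Omega -> R) Rs w t :
  (forall w, 0 <= P0 w) -> (forall t w x, 0 <= x -> 0 <= Rs t w x) ->
  0 <= price P0 Rs w t.
Proof. move=> P00 Rs0; elim: t => [|t IH] /=; [exact: P00 | exact: Rs0]. Qed.

Lemma path_cost_ge0 (R : realType) (g be : R) Cd (B : policy R) p :
  0 < g -> 0 <= be -> (forall i, 0 <= Cd i) -> (forall t, 0 <= p t) ->
  (0 <= path_cost g 0 be Cd B p)%E.
Proof.
move=> g0 be0 C0 p0; apply: nneseries_ge0 => t _ _; rewrite lee_fin.
exact: (b_ge0 B g0 be0 C0 p0).
Qed.

Lemma never_zero (R : realType) (g be : R) Cd p :
  (forall i, (1 <= i)%N -> Cd i = 0) ->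
  path_cost g 0 be Cd (fun _ _ _ => fset0) p = 0%E.
Proof.
move=> Cz; rewrite /path_cost.
apply: eseries0 => t _ _; congr (_%:E).
rewrite /stage_cost /pub_cost eqxx mulr0 mulr0 addr0 mulr0 add0r fsetD0 /delay_cost.
rewrite big1_seq ?mulr0 // => x /andP[_ xq].
apply: Cz; have := queue_lt xq; lia.
Qed.

Lemma thr_zero (R : realType) (g be : R) Cd p :
  0 < g -> 0 <= be -> (forall t, 0 <= p t) ->
  (forall i, (1 <= i)%N -> Cd i = 0) ->
  forall t, aA g be Cd p t = 0.
Proof.
move=> g0 be0 p0 Cz t; rewrite /aA.
have Fz : forall n, Fd g Cd n = 0.
  move=> n; apply: big1 => j _; apply: big1_seq => i /andP[_].
  by rewrite mem_iota => /andP[i1 _]; rewrite Cz ?mulr0.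
case c: (condA g be Cd p t).
  rewrite stage_A_cond //.
  case: t c => [|t] c; first by rewrite /= !mulr0.
  move: c; rewrite cond_eq // Fz => c.
  have : 0 < g ^+ (t.+1 - es g be Cd p t.+1 - 1) by exact: exprn_gt0.
  have := p0 t.+1.
  move=> pt gp.
  have bp : be * p t.+1 <= 0.
    by rewrite -(pmulr_rle0 _ gp) mulrA.
  have bp0 : be * p t.+1 = 0 by apply/eqP; rewrite eq_le bp mulr_ge0.
  by rewrite [p t.+1 * _]mulrA (mulrC (p t.+1) be) bp0 mul0r mulr0.
rewrite stage_A_ncond ?c // /Dsum big1_seq ?mulr0 // => i /andP[_].
by rewrite mem_iota => /andP[i1 _]; rewrite Cz.
Qed.

Unset Implicit Arguments.

Theorem theorem2 (R : realType) (d : measure_display) (Omega : measurableType d)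
  (Pr : probability Omega R) (P0 : Omega -> R) (Rs : nat -> Omega -> R -> R)
  (gamma beta sigma : R) (Cd : nat -> R) (pistar : policy R) :
  0 < gamma < 1 ->
  0 <= beta ->
  (forall i, 0 <= Cd i) ->
  (forall w, 0 <= P0 w) ->
  (forall t w x, 0 <= x -> 0 <= Rs t w x) ->
  sub_additive gamma (sigma / 2) (Fd gamma Cd) ->
  optimal_policy Pr P0 Rs gamma 0 beta Cd pistar ->
  (expected_cost Pr P0 Rs gamma 0 beta Cd (threshold_policy gamma beta (Fd gamma Cd))
     <= sigma%:E * expected_cost Pr P0 Rs gamma 0 beta Cd pistar)%E.
Proof.
move=> /andP[g0 g1] be0 C0 P00 Rs0 sa [_ opt].
have p0 : forall w t, 0 <= price P0 Rs w t by move=> w t; exact: price_ge0.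
have [sg2|sg2] := lerP 2 sigma.
  rewrite /expected_cost.
  apply: int_le_scale.
  - move=> w; apply: path_cost_ge0 => //; exact: p0.
  - move=> w; apply: path_cost_ge0 => //; exact: p0.
  - lra.
  move=> w; rewrite /path_cost.
  apply: series_le_scale.
  - move=> t; rewrite -/(bB gamma beta Cd (thrA gamma beta Cd) (price P0 Rs w) t).
    apply: b_ge0 => //; exact: p0.
  - move=> t; rewrite -/(bB gamma beta Cd pistar (price P0 Rs w) t).
    apply: b_ge0 => //; exact: p0.
  - lra.
  move=> T.
  exact: (Fin_lemma pistar g0 be0 C0 (p0 w) sg2 sa T).
have Cz := small_sigma g0 C0 sa sg2.
have LHS0 : expected_cost Pr P0 Rs gamma 0 beta Cd (threshold_policy gamma beta (Fd gamma Cd)) = 0%E.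
  rewrite /expected_cost; apply: integral0_eq => w _.
  rewrite /path_cost; apply: eseries0 => t _ _; congr (_%:E).
  exact: (thr_zero g0 be0 (p0 w) Cz t).
have never0 : expected_cost Pr P0 Rs gamma 0 beta Cd (fun _ _ _ => fset0) = 0%E.
  rewrite /expected_cost; apply: integral0_eq => w _; exact: never_zero.
have Estar0 : expected_cost Pr P0 Rs gamma 0 beta Cd pistar = 0%E.
  apply/eqP; rewrite eq_le; apply/andP; split.
    rewrite -never0; apply: opt => t p Q; exact: fsub0set.
  apply: integral_ge0 => w _; apply: path_cost_ge0 => //; exact: p0.
by rewrite LHS0 Estar0 mule0.
Qed.
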